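(* Suppose $h$ is $L_h$-smooth (its gradient is $L_h$-Lipschitz in the Euclidean norm) and $h^*$ is twice differentiable on $\mathbb{R}^d$ with $M$-Lipschitz Hessian in the sense that $\|(\nabla^2h^*(x)-\nabla^2h^*(y))u\|\le M\|x-y\|\,\|u\|$ for all $x,y,u\in\mathbb{R}^d$. Then for all $x,y,v\in\mathbb{R}^d$ and $\lambda\in[-1,1]$, $$D_{h^*}(x+\lambda v,x)\le G(x,y,v)\,\lambda^2D_{h^*}(y+v,y),\qquad\text{with } G(x,y,v)=1+2ML_h\big(\|y-x\|+\|v\|\big).$$
   Context: $\|\cdot\|$ is the Euclidean norm. $h^*$ denotes the convex conjugate of the convex function $h$, and for differentiable $\varphi$, $D_\varphi(x,y)=\varphi(x)-\varphi(y)-\nabla\varphi(y)^\top(x-y)$. *)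

(* Defs.v *)
From HB Require Import structures.
From mathcomp Require Import all_boot all_order all_algebra.
From mathcomp Require Import all_classical all_reals all_analysis.
Set Implicit Arguments. Unset Strict Implicit. Unset Printing Implicit Defensive.
Import Order.TTheory GRing.Theory Num.Theory.
Import numFieldNormedType.Exports.
Local Open Scope ring_scope.
Local Open Scope classical_set_scope.

Section Defs.
Variables (R : realType) (d : nat).
Local Notation V := 'rV[R]_d.

Definition dotp (u v : V) : R := \sum_(i < d) u ord0 i * v ord0 i.
Definition enorm (u : V) : R := Num.sqrt (dotp u u).

Definition grad (f : V -> R) (x : V) : V :=
  \row_(i < d) ('d f x (delta_mx ord0 i : V)).

Definition bregman (f : V -> R) (x y : V) : R :=
  f x - f y - dotp (grad f y) (x - y).

Definition conjugate (h : V -> R) (y : V) : \bar R :=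
  ereal_sup (range (fun x : V => (dotp y x - h x)%:E)).

Definition convex_fun (h : V -> R) : Prop :=
  forall (x y : V) (t : R), 0 <= t <= 1 ->
    h (t *: x + (1 - t) *: y) <= t * h x + (1 - t) * h y.
End Defs.

(* Main.v *)
Require Import Defs.
From HB Require Import structures.
From mathcomp Require Import all_boot all_order all_algebra.
From mathcomp Require Import all_classical all_reals all_analysis.
From mathcomp Require Import ring lra.
Import Order.TTheory GRing.Theory Num.Theory.
Import numFieldNormedType.Exports.
Local Open Scope ring_scope.


Section Dot.
Context {R : realType} {d : nat}.
Local Notation V := 'rV[R]_d.
Implicit Types u w z : V.

Lemma dotpC u w : dotp u w = dotp w u.
Proof. by apply: eq_bigr => i _; rewrite mulrC. Qed.

Lemma dotpDl u w z : dotp (u + w) z = dotp u z + dotp w z.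
Proof. by rewrite /dotp -big_split; apply: eq_bigr => i _; rewrite mxE mulrDl. Qed.

Lemma dotpZl c u w : dotp (c *: u) w = c * dotp u w.
Proof. by rewrite /dotp mulr_sumr; apply: eq_bigr => i _; rewrite mxE mulrA. Qed.

Lemma dotpNl u w : dotp (- u) w = - dotp u w.
Proof. by rewrite -scaleN1r dotpZl mulN1r. Qed.

Lemma dotpBl u w z : dotp (u - w) z = dotp u z - dotp w z.
Proof. by rewrite dotpDl dotpNl. Qed.

Lemma dotpDr u w z : dotp z (u + w) = dotp z u + dotp z w.
Proof. by rewrite dotpC dotpDl !(dotpC z). Qed.
Lemma dotpZr c u w : dotp w (c *: u) = c * dotp w u.
Proof. by rewrite dotpC dotpZl dotpC. Qed.
Lemma dotpNr u w : dotp w (- u) = - dotp w u.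
Proof. by rewrite dotpC dotpNl dotpC. Qed.
Lemma dotpBr u w z : dotp z (u - w) = dotp z u - dotp z w.
Proof. by rewrite dotpDr dotpNr. Qed.
Lemma dotp0r u : dotp u 0 = 0.
Proof. by rewrite /dotp big1 // => i _; rewrite mxE mulr0. Qed.

Lemma dotpp_ge0 u : 0 <= dotp u u.
Proof. by apply: sumr_ge0 => i _; rewrite -expr2 sqr_ge0. Qed.

Lemma dotpp_eq0 u : dotp u u = 0 -> u = 0.
Proof.
move=> /eqP; rewrite psumr_eq0; last by move=> i _; rewrite -expr2 sqr_ge0.
move=> /allP H; apply/rowP => i; rewrite mxE.
have := H i (mem_index_enum i); rewrite -expr2 sqrf_eq0 => /eqP.
done.
Qed.

Lemma enorm_sq u : enorm u ^+ 2 = dotp u u.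
Proof. by rewrite sqr_sqrtr // dotpp_ge0. Qed.

Lemma enorm_ge0 u : 0 <= enorm u.
Proof. exact: sqrtr_ge0. Qed.

Lemma CS u w : dotp u w ^+ 2 <= dotp u u * dotp w w.
Proof.
have [w0|wn0] := eqVneq (dotp w w) 0.
  by rewrite (dotpp_eq0 w w0) !dotp0r expr0n /= mulr0.
have wp : 0 < dotp w w by rewrite lt_def wn0 dotpp_ge0.
set t := dotp u w / dotp w w.
have := dotpp_ge0 (u - t *: w).
rewrite !dotpBl !dotpBr !dotpZl !dotpZr (dotpC w u) /t => H.
have e : dotp u u - dotp u w / dotp w w * dotp u w -
      (dotp u w / dotp w w * dotp u w - dotp u w / dotp w w * (dotp u w / dotp w w * dotp w w))
      = dotp u u - dotp u w ^+ 2 / dotp w w.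
  by field; rewrite wn0.
rewrite e subr_ge0 ler_pdivrMr // in H.
Qed.

Lemma CSn u w : dotp u w <= enorm u * enorm w.
Proof.
have := CS u w; rewrite -!enorm_sq -exprMn => H.
have := mulr_ge0 (enorm_ge0 u) (enorm_ge0 w).
move: H; set a := dotp u w; set p := enorm u * enorm w => H hp.
case: (lerP a p) => // hlt; exfalso.
have : p ^+ 2 < a ^+ 2 by rewrite ltr_pXn2r // ?(le_lt_trans hp hlt) //; rewrite ?nnegrE // ltW // (le_lt_trans hp hlt).
by rewrite ltNge H.
Qed.

Lemma enorm_triangle u w : enorm (u + w) <= enorm u + enorm w.
Proof.
have H : enorm (u + w) ^+ 2 <= (enorm u + enorm w) ^+ 2.
  rewrite enorm_sq dotpDl !dotpDr (dotpC w u) sqrrD !enorm_sq.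
  have := CSn u w; lra.
have hp := addr_ge0 (enorm_ge0 u) (enorm_ge0 w).
move: H; set a := enorm (u + w); set p := enorm u + enorm w => H.
case: (lerP a p) => // hlt; exfalso.
have : p ^+ 2 < a ^+ 2 by rewrite ltr_pXn2r // ?nnegrE // ltW // (le_lt_trans hp hlt).
by rewrite ltNge H.
Qed.

Lemma enormZ c u : enorm (c *: u) = `|c| * enorm u.
Proof.
by rewrite /enorm dotpZl dotpZr mulrA -expr2 sqrtrM ?sqr_ge0 // sqrtr_sqr.
Qed.

Lemma enormN u : enorm (- u) = enorm u.
Proof. by rewrite -scaleN1r enormZ normrN normr1 mul1r. Qed.

Lemma enormB u w : enorm (u - w) = enorm (w - u).
Proof. by rewrite -enormN opprB. Qed.

End Dot.


Section Der.
Context {R : realType} {d : nat}.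
Local Notation V := 'rV[R]_d.

Lemma dgrad (f : V -> R) x u : 'd f x u = dotp (grad f x) u.
Proof.
rewrite {1}(matrix_sum_delta u) big_ord1 linear_sum /dotp.
apply: eq_bigr => j _; rewrite linearZ /= mxE mulrC.
by have -> : (ord0 : 'I_1) = 0 by [].
Qed.

Lemma is_derive_line (W : normedModType R) (f : V -> W) p q s :
  derivable f (p + s *: q) q ->
  is_derive s 1 (fun t : R => f (p + t *: q)) ('D_q f (p + s *: q)).
Proof.
have E : (fun h : R => h^-1 *: (((fun t : R => f (p + t *: q)) \o shift s) (h *: 1)
             - (fun t : R => f (p + t *: q)) s)) =
         (fun h : R => h^-1 *: ((f \o shift (p + s *: q)) (h *: q) - f (p + s *: q))).
  apply/funext => h /=; congr (_ *: (f _ - _)).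
  by rewrite scalerDl /GRing.scale /= mulr1 addrCA addrC.
move=> df; split; first by rewrite /derivable E.
by rewrite /derive E.
Qed.

Lemma isd_f (f : V -> R) p q s : differentiable f (p + s *: q) ->
  is_derive s 1 (fun t : R => f (p + t *: q)) (dotp (grad f (p + s *: q)) q).
Proof.
move=> df; apply: is_derive_eq; first exact/is_derive_line/diff_derivable.
by rewrite deriveE // dgrad.
Qed.

Lemma isd_grad (G : V -> V) p q s : differentiable G (p + s *: q) ->
  is_derive s 1 (fun t : R => dotp (G (p + t *: q)) q) (dotp ('d G (p + s *: q) q) q).
Proof.
move=> dG.
have hd := @is_derive_line _ G p q s (diff_derivable (v:=q) dG).
have dGt : derivable (fun t : R => G (p + t *: q)) s 1 by case: hd.
have := derive_mx dGt; rewrite derive_val deriveE // => Hm.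
have cd : forall i j, derivable (fun t : R => G (p + t *: q) i j) s 1.
  by move/derivable_mxP : dGt.
have -> : (fun t : R => dotp (G (p + t *: q)) q) =
   \sum_(i < d) (fun t : R => G (p + t *: q) ord0 i * q ord0 i).
  by rewrite fct_sumE.
rewrite /dotp; apply: is_derive_sum => i.
have -> : (fun t : R => G (p + t *: q) ord0 i * q ord0 i) =
   (q ord0 i) \*: (fun t : R => G (p + t *: q) ord0 i).
  by apply/funext => t /=; rewrite mulrC.
rewrite [X in is_derive _ _ _ X](_ : _ = q ord0 i *: 'D_1 (fun t : R => G (p + t *: q) ord0 i) s).
  apply: is_deriveZ; exact/derivableP/cd.
by rewrite Hm mxE /GRing.scale /= mulrC.
Qed.

End Der.


Section OneD.
Set Implicit Arguments. Unset Strict Implicit.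
Context {R : realType}.
Implicit Types (f g : R -> R) (df dg s k c a b x : R).

Lemma isd_D f g df dg s : is_derive s 1 f df -> is_derive s 1 g dg ->
  is_derive s 1 (fun t => f t + g t) (df + dg).
Proof. move=> H1 H2; exact: is_deriveD. Qed.

Lemma isd_B f g df dg s : is_derive s 1 f df -> is_derive s 1 g dg ->
  is_derive s 1 (fun t => f t - g t) (df - dg).
Proof. move=> H1 H2; exact: is_deriveB. Qed.

Lemma isd_Z k f df s : is_derive s 1 f df ->
  is_derive s 1 (fun t => k * f t) (k * df).
Proof. move=> H1; exact: (is_deriveZ k H1). Qed.

Lemma isd_id s : is_derive s 1 (fun t : R => t) 1.
Proof. exact: is_derive_id. Qed.

Lemma isd_cst c s : is_derive s 1 (fun t : R => c) 0.
Proof. exact: is_derive_cst. Qed.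

Lemma isd_lin c s : is_derive s 1 (fun t : R => c * t) c.
Proof. have H := isd_Z c (isd_id s); rewrite mulr1 in H; exact: H. Qed.

Lemma isd_sq c s : is_derive s 1 (fun t : R => c * t ^+ 2 / 2) (c * s).
Proof.
have H : is_derive s 1 (fun t : R => t * t) (s * 1 + s * 1).
  exact: (is_deriveM (isd_id s) (isd_id s)).
have -> : (fun t : R => c * t ^+ 2 / 2) = (fun t => (c / 2) * (t * t)).
  by apply/funext => t; rewrite expr2 mulrAC mulrA.
have H2 := isd_Z (c/2) H.
have -> : c * s = c / 2 * (s * 1 + s * 1) by field.
exact: H2.
Qed.

Lemma mono_lemma f (df : R -> R) a b : a <= b -> (forall x, is_derive x 1 f (df x)) ->
  (forall x, a <= x <= b -> 0 <= df x) -> f a <= f b.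
Proof.
move=> ab Hd Hp.
have cf : continuous f.
  move=> x; apply: differentiable_continuous.
  by apply/derivable1_diffP; case: (Hd x).
apply: (@ger0_derive1_ndecr _ f a b) => //.
- move=> x; rewrite in_itv /= => /andP[h1 h2].
  by rewrite derive1E; case: (Hd x) => _ ->; apply: Hp; rewrite !ltW.
- exact: continuous_subspaceT.
Qed.

Lemma taylor_ub f f1 f2 b K : 0 <= b ->
  (forall s, is_derive s 1 f (f1 s)) -> (forall s, is_derive s 1 f1 (f2 s)) ->
  (forall s, 0 <= s <= b -> f2 s <= K) ->
  f b - f 0 - f1 0 * b <= K * b ^+ 2 / 2.
Proof.
move=> b0 d1 d2 Hk.
have st1 : forall s, 0 <= s <= b -> f1 s - f1 0 <= K * s.
  move=> s /andP[s0 sb].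
  have := @mono_lemma (fun t => K * t - f1 t) (fun t => K - f2 t) 0 s s0.
  have H : forall x, is_derive x 1 (fun t => K * t - f1 t) (K - f2 x).
    by move=> x; exact: (isd_B (isd_lin K x) (d2 x)).
  move=> /(_ H) /= H2.
  have : 0 <= s by [].
  suff : K * 0 - f1 0 <= K * s - f1 s by lra.
  apply: H2 => x /andP[x0 xs]; rewrite subr_ge0; apply: Hk.
  by rewrite x0 (le_trans xs sb).
have H : forall x, is_derive x 1 (fun t => K * t ^+ 2 / 2 - f t + f1 0 * t)
                               (K * x - f1 x + f1 0).
  move=> x; exact: (isd_D (isd_B (isd_sq K x) (d1 x)) (isd_lin (f1 0) x)).
have := @mono_lemma _ _ 0 b b0 H.
have -> : (K * 0 ^+ 2 / 2 - f 0 + f1 0 * 0) = - f 0 by ring.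
move=> H2.
suff : - f 0 <= K * b ^+ 2 / 2 - f b + f1 0 * b by lra.
apply: H2 => x hx; have := st1 x hx; lra.
Qed.

Lemma lim_eps (X Y C : R) : (forall e, 0 < e -> X <= Y + C * e) -> X <= Y.
Proof.
move=> H; case: (lerP X Y) => // hlt; exfalso.
have hc : 0 < `|C| + 1 by have := normr_ge0 C; lra.
set e := (X - Y) / (`|C| + 1).
have e0 : 0 < e by rewrite divr_gt0 // subr_gt0.
have := H e e0.
have : C * e <= `|C| * e by rewrite ler_pM2r // ler_norm.
have : (`|C| + 1) * e = X - Y by rewrite /e mulrC divfK // gt_eqF.
nra.
Qed.

End OneD.
Unset Implicit Arguments. Set Strict Implicit.


Section Conj.
Context {R : realType} {d : nat}.
Local Notation V := 'rV[R]_d.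

Lemma descent (h : V -> R) Lh : (forall x, differentiable h x) ->
  (forall x y : V, enorm (grad h x - grad h y) <= Lh * enorm (x - y)) ->
  forall x u, h (x + u) <= h x + dotp (grad h x) u + Lh / 2 * dotp u u.
Proof.
move=> dh Lip x u; rewrite -/(grad h x).
pose g := grad h x.
have H : forall t : R, is_derive t 1 (fun s : R => Lh * dotp u u * s ^+ 2 / 2 - h (x + s *: u) + dotp g u * s)
   (Lh * dotp u u * t - dotp (grad h (x + t *: u)) u + dotp g u).
  by move=> t; exact: (isd_D (isd_B (isd_sq _ t) (isd_f h x u t (dh _))) (isd_lin _ t)).
have := @mono_lemma _ _ _ 0 1 ler01 H.
rewrite !scale0r !scale1r !addr0.
have -> : Lh * dotp u u * 0 ^+ 2 / 2 - h x + dotp g u * 0 = - h x by ring.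
move=> H2.
suff : - h x <= Lh * dotp u u * 1 ^+ 2 / 2 - h (x + u) + dotp g u * 1 by lra.
apply: H2 => t /andP[t0 t1].
have e1 : dotp (grad h (x + t *: u)) u - dotp g u = dotp (grad h (x + t *: u) - g) u.
  by rewrite dotpBl.
have e2 := CSn (grad h (x + t *: u) - g) u.
have e3 := Lip (x + t *: u) x.
rewrite [x + _ - x]addrC addKr enormZ ger0_norm // in e3.
have e4 : enorm (grad h (x + t *: u) - g) * enorm u <= Lh * (t * enorm u) * enorm u.
  by rewrite ler_wpM2r // enorm_ge0.
have e5 : Lh * (t * enorm u) * enorm u = Lh * dotp u u * t.
  by rewrite -enorm_sq expr2; ring.
have G1 : dotp (grad h (x + t *: u)) u - dotp g u <= Lh * dotp u u * t.
  rewrite e1 -e5; exact: (le_trans e2 e4).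
rewrite -subr_ge0 opprB addrA in G1.
by rewrite addrAC.
Qed.

Lemma conj_ub (h hs : V -> R) : (forall y, (hs y)%:E = conjugate h y) ->
  forall y x, dotp y x - h x <= hs y.
Proof.
move=> Hc y x.
have := @ereal_sup_ubound _ (range (fun x => (dotp y x - h x)%:E)) (dotp y x - h x)%:E.
rewrite -/(conjugate h y) -Hc lee_fin; apply; by exists x.
Qed.

Lemma conj_approx (h hs : V -> R) : (forall y, (hs y)%:E = conjugate h y) ->
  forall y e, 0 < e -> exists x, hs y - e < dotp y x - h x.
Proof.
move=> Hc y e e0.
have : ((hs y - e)%:E < conjugate h y)%E by rewrite -Hc lte_fin; lra.
move=> /ereal_sup_gt [z [x _ <-]]; rewrite lte_fin => H.
by exists x.
Qed.


Lemma para (b a : V) : dotp (b + a) (b + a) + dotp (b - a) (b - a) = 2 * dotp b b + 2 * dotp a a.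
Proof. rewrite !dotpDl ?dotpBl ?dotpNl !dotpDr ?dotpBr ?dotpNr (dotpC a b); ring. Qed.

Lemma sd_bound (h hs : V -> R) Lh : (forall x, differentiable h x) ->
  (forall x y : V, enorm (grad h x - grad h y) <= Lh * enorm (x - y)) ->
  (forall y, (hs y)%:E = conjugate h y) ->
  forall w a t e, 0 < e -> 0 <= t - Lh / 2 * t ^+ 2 ->
  2 * (t - Lh / 2 * t ^+ 2) * dotp a a - 2 * e <= hs (w + a) + hs (w - a) - 2 * hs w.
Proof.
move=> dh Lip Hc w a t e e0 c0.
have [x0 Hx0] := conj_approx h hs Hc w e e0.
set g := grad h x0; set c := t - Lh / 2 * t ^+ 2.
have LB : forall y, dotp y x0 - h x0 + c * dotp (y - g) (y - g) <= hs y.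
  move=> y.
  have D := descent h Lh dh Lip x0 (t *: (y - g)); have U := conj_ub h hs Hc y (x0 + t *: (y - g)).
  rewrite dotpDr dotpZr in U; rewrite dotpZr dotpZl dotpZr in D.
  have key : dotp (y - g) (y - g) = dotp y (y - g) - dotp g (y - g) by rewrite dotpBl.
  rewrite key in D *.
  have E : dotp y x0 - h x0 + c * (dotp y (y - g) - dotp g (y - g)) =
           dotp y x0 + t * dotp y (y - g) - (h x0 + t * dotp g (y - g) +
             Lh / 2 * (t * (t * (dotp y (y - g) - dotp g (y - g))))) by rewrite /c; ring.
  by rewrite E; apply: le_trans U; rewrite lerD2l lerN2.
have L1 := LB (w + a); have L2 := LB (w - a).
have e1 : w + a - g = (w - g) + a by rewrite addrAC.
have e2 : w - a - g = (w - g) - a by rewrite addrAC.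
rewrite e1 dotpDl in L1; rewrite e2 dotpBl in L2.
have Pa := para (w - g) a.
have cb : 0 <= c * dotp (w - g) (w - g) by rewrite mulr_ge0 // dotpp_ge0.
have Pc : c * dotp (w - g + a) (w - g + a) + c * dotp (w - g - a) (w - g - a) =
   2 * (c * dotp (w - g) (w - g)) + 2 * c * dotp a a.
  by rewrite -mulrDr Pa; ring.
Time move: Hx0 L1 L2 Pc cb.
Time move: (c * dotp (w - g + a) (w - g + a)) => A1.
Time move: (c * dotp (w - g - a) (w - g - a)) => A2.
Time move: (c * dotp (w - g) (w - g)) => B1.
Time move: (2 * c * dotp a a) => C1.
Time move: (dotp w x0) (dotp a x0) (hs w) (hs (w + a)) (hs (w - a)) (h x0) => P1 P2 hw hp hm hx.
Time lra.
Qed.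

End Conj.


Section Hess.
Context {R : realType} {d : nat}.
Local Notation V := 'rV[R]_d.

Lemma taylor_dir (hs : V -> R) M :
  (forall x, differentiable hs x) -> (forall x, differentiable (grad hs) x) ->
  (forall x y u : V,
     enorm ('d (grad hs) x u - 'd (grad hs) y u) <= M * enorm (x - y) * enorm u) ->
  0 <= M -> forall w q del, 0 <= del ->
  hs (w + del *: q) - hs w - dotp (grad hs w) q * del <=
   (dotp ('d (grad hs) w q) q + M * del * enorm q ^+ 3) * del ^+ 2 / 2.
Proof.
move=> dhs dG HL M0 w q del del0.
have := @taylor_ub _ (fun s => hs (w + s *: q)) (fun s => dotp (grad hs (w + s *: q)) q)
   (fun s => dotp ('d (grad hs) (w + s *: q) q) q) del
   (dotp ('d (grad hs) w q) q + M * del * enorm q ^+ 3) del0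
   (fun s => isd_f hs w q s (dhs _)) (fun s => isd_grad (grad hs) w q s (dG _)).
rewrite /= scale0r addr0; apply => s /andP[s0 sd].
have e1 := CSn ('d (grad hs) (w + s *: q) q - 'd (grad hs) w q) q.
have e2 := HL (w + s *: q) w q.
rewrite [w + _ - w]addrC addKr enormZ ger0_norm // in e2.
have e3 : enorm ('d (grad hs) (w + s *: q) q - 'd (grad hs) w q) * enorm q <=
   M * (s * enorm q) * enorm q * enorm q by rewrite ler_wpM2r // enorm_ge0.
have e4 : M * (s * enorm q) * enorm q * enorm q <= M * del * enorm q ^+ 3.
  rewrite [M * del * _]mulrC [M * (s * _) * _ * _](_ : _ = enorm q ^+ 3 * (M * s)); last by ring.
  by rewrite ler_wpM2l ?exprn_ge0 ?enorm_ge0 // ler_wpM2l.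
rewrite dotpBl in e1.
have H := le_trans e1 (le_trans e3 e4).
by rewrite -lerBlDl.
Qed.

End Hess.


Lemma arith_key {R : realType} (vv L k M n3 del A B C G : R) : 0 < del -> 0 < L ->
   del * (del * vv) / L <= A + B - 2 * C ->
   A - C - G * del <= (k + M * del * n3) * del ^+ 2 / 2 ->
   B - C - (- G) * del <= (k + M * del * n3) * del ^+ 2 / 2 ->
   vv / L <= k + M * n3 * del.
Proof.
move=> d0 L0 S T1 T2.
have e1 : del * (del * vv) / L = del ^+ 2 * (vv / L) by rewrite expr2; field; rewrite gt_eqF.
have e2 : (k + M * del * n3) * del ^+ 2 / 2 = del ^+ 2 * (k + M * n3 * del) / 2 by ring.
rewrite e1 in S; rewrite e2 in T1 T2.
have hd : 0 < del ^+ 2 by rewrite exprn_gt0.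
rewrite -(ler_pM2l hd).
move: S T1 T2; move: (del ^+ 2 * (vv / L)) (del ^+ 2 * (k + M * n3 * del)) => P Q.
rewrite mulNr; lra.
Qed.

Arguments arith_key {R vv L k M n3 del A B C G}.

Section Hess2.
Context {R : realType} {d : nat}.
Local Notation V := 'rV[R]_d.

Lemma hess_lb (h hs : V -> R) Lh M : (forall x, differentiable h x) ->
  (forall x y : V, enorm (grad h x - grad h y) <= Lh * enorm (x - y)) ->
  (forall y, (hs y)%:E = conjugate h y) ->
  (forall x, differentiable hs x) -> (forall x, differentiable (grad hs) x) ->
  (forall x y u : V,
     enorm ('d (grad hs) x u - 'd (grad hs) y u) <= M * enorm (x - y) * enorm u) ->
  0 < Lh -> forall w v, dotp v v <= Lh * dotp ('d (grad hs) w v) v.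
Proof.
move=> dh Lip Hc dhs dG HL Lh0 w v.
have [->|vn0] := eqVneq v 0.
  by rewrite linear0 !dotp0r mulr0.
have nv0 : 0 < enorm v.
  rewrite lt_def enorm_ge0 andbT; apply/eqP => H0.
  have : dotp v v = 0 by rewrite -enorm_sq H0 expr0n.
  by move/dotpp_eq0; apply/eqP.
have M0 : 0 <= M.
  have := HL v 0 v; rewrite subr0 => H1.
  have := le_trans (enorm_ge0 _) H1 => H2.
  by move: H2; rewrite -mulrA pmulr_lge0 // mulr_gt0.
have SD : forall a, dotp a a / Lh <= hs (w + a) + hs (w - a) - 2 * hs w.
  move=> a; apply: (@lim_eps _ _ _ 2) => e e0.
  have c0 : 0 <= Lh^-1 - Lh / 2 * Lh^-1 ^+ 2.
    have -> : Lh^-1 - Lh / 2 * Lh^-1 ^+ 2 = (2 * Lh)^-1.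
      by field; rewrite gt_eqF.
    by rewrite invr_ge0 ltW // mulr_gt0.
  have := sd_bound h hs Lh dh Lip Hc w a Lh^-1 e e0 c0.
  have -> : 2 * (Lh^-1 - Lh / 2 * Lh^-1 ^+ 2) * dotp a a = dotp a a / Lh.
    by field; rewrite gt_eqF.
  by move=> H; rewrite -lerBlDr.
have key : forall del, 0 < del ->
    dotp v v / Lh <= dotp ('d (grad hs) w v) v + M * enorm v ^+ 3 * del.
  move=> del del0.
  have T1 := taylor_dir hs M dhs dG HL M0 w v del (ltW del0).
  have T2 := taylor_dir hs M dhs dG HL M0 w (- v) del (ltW del0).
  have Ln : 'd (grad hs) w (- v) = - 'd (grad hs) w v by rewrite linearN.
  rewrite Ln !dotpNl !dotpNr opprK enormN scalerN in T2.
  have S := SD (del *: v).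
  rewrite dotpZl dotpZr in S.
  exact: (arith_key del0 Lh0 S T1 T2).
have := @lim_eps _ (dotp v v / Lh) (dotp ('d (grad hs) w v) v) (M * enorm v ^+ 3) key.
by rewrite ler_pdivrMr // mulrC.
Qed.

End Hess2.


Lemma arith2 {R : realType} (A1 A0 Ad B1 B0 Bd Kl : R) :
  A1 - Kl * B1 - (A0 - Kl * B0) - (Ad - Kl * Bd) * 1 <= 0 * 1 ^+ 2 / 2 ->
  A1 - A0 - Ad <= Kl * (B1 - B0 - Bd).
Proof.
have -> : A1 - Kl * B1 - (A0 - Kl * B0) - (Ad - Kl * Bd) * 1 =
   (A1 - A0 - Ad) - Kl * (B1 - B0 - Bd) by ring.
by rewrite mul0r mul0r subr_le0.
Qed.

Lemma arith3 {R : realType} (hz hw M Lh del nv D lam : R) : 0 <= M -> 0 < Lh ->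
  0 <= del -> del <= 2 * D -> hz - hw <= M * del * nv * nv -> nv ^+ 2 <= Lh * hw ->
  lam * (lam * hz) - (1 + 2 * M * Lh * D) * lam ^+ 2 * hw <= 0.
Proof.
move=> M0 L0 d0 dD H1 H2.
have hw0 : 0 <= hw.
  have : 0 <= Lh * hw by apply: le_trans H2; exact: sqr_ge0.
  by rewrite pmulr_rge0.
have Md : 0 <= M * del by rewrite mulr_ge0.
have E1 : M * del * nv * nv <= M * del * (Lh * hw).
  by rewrite -mulrA -expr2 ler_wpM2l.
have E2 : M * del * (Lh * hw) <= 2 * M * Lh * D * hw.
  have -> : M * del * (Lh * hw) = del * (M * Lh * hw) by ring.
  have -> : 2 * M * Lh * D * hw = (2 * D) * (M * Lh * hw) by ring.
  by rewrite ler_wpM2r // !mulr_ge0 // ltW.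
have E3 : hz <= (1 + 2 * M * Lh * D) * hw.
  have -> : (1 + 2 * M * Lh * D) * hw = hw + 2 * M * Lh * D * hw by ring.
  by rewrite -lerBlDl (le_trans H1 (le_trans E1 E2)).
have -> : lam * (lam * hz) - (1 + 2 * M * Lh * D) * lam ^+ 2 * hw =
   lam ^+ 2 * (hz - (1 + 2 * M * Lh * D) * hw) by ring.
by apply: mulr_ge0_le0; [exact: sqr_ge0 | rewrite subr_le0].
Qed.


Lemma breg0 {R : realType} {d : nat} (f : 'rV[R]_d -> R) x : bregman f x x = 0.
Proof. by rewrite /bregman subrr subrr dotp0r subr0. Qed.

Lemma dist_bound {R : realType} {d : nat} (x y v : 'rV[R]_d) s lam :
  0 <= s <= 1 -> -1 <= lam <= 1 ->
  enorm (x + s *: (lam *: v) - (y + s *: v)) <= 2 * (enorm (y - x) + enorm v).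
Proof.
move=> /andP[s0 s1] /andP[l0 l1].
have -> : x + s *: (lam *: v) - (y + s *: v) = (x - y) + (s * lam - s) *: v.
  by apply/rowP => i; rewrite !mxE; ring.
apply: le_trans (enorm_triangle _ _) _.
rewrite enormZ enormB.
have : `|s * lam - s| <= 2.
  rewrite ler_norml; apply/andP; split; nra.
have := enorm_ge0 v; have := enorm_ge0 (y - x).
move: (`|s * lam - s|) (enorm v) (enorm (y - x)) => a b c; nra.
Qed.

Lemma arith4 {R : realType} (P N D : R) :
  2 * P - 2 * 1 <= D -> N + 2 <= P -> 0 <= N -> D <= N -> False.
Proof. lra. Qed.

Lemma arith3' {R : realType} (A hz hw M Lh del nv D lam : R) :
  A = lam * (lam * hz) -> 0 <= M -> 0 < Lh ->
  0 <= del -> del <= 2 * D -> hz - hw <= M * del * nv * nv -> nv ^+ 2 <= Lh * hw ->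
  A - (1 + 2 * M * Lh * D) * lam ^+ 2 * hw <= 0.
Proof. move=> ->; exact: arith3. Qed.

Arguments arith3' {R A hz hw M Lh del nv D lam}.
Arguments arith2 {R A1 A0 Ad B1 B0 Bd Kl}.

Theorem proposition1 (R : realType) (d : nat) (h hs : 'rV[R]_d -> R) (Lh M : R) :
  convex_fun h ->
  (* h is L_h-smooth *)
  (forall x : 'rV[R]_d, differentiable h x) ->
  (forall x y : 'rV[R]_d, enorm (grad h x - grad h y) <= Lh * enorm (x - y)) ->
  (* hs is h^*, which is finite (real-valued) on R^d *)
  (forall y : 'rV[R]_d, (hs y)%:E = conjugate h y) ->
  (* h^* is twice differentiable on R^d *)
  (forall x : 'rV[R]_d, differentiable hs x) ->
  (forall x : 'rV[R]_d, differentiable (grad hs) x) ->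
  (* M-Lipschitz Hessian: ||(Hess h^*(x) - Hess h^*(y)) u|| <= M ||x-y|| ||u|| *)
  (forall x y u : 'rV[R]_d,
     enorm ('d (grad hs) x u - 'd (grad hs) y u) <= M * enorm (x - y) * enorm u) ->
  forall (x y v : 'rV[R]_d) (lam : R), -1 <= lam <= 1 ->
    bregman hs (x + lam *: v) x <=
      (1 + 2 * M * Lh * (enorm (y - x) + enorm v)) * lam ^+ 2 * bregman hs (y + v) y.
Proof.
move=> _ dh Lip Hc dhs dG HL x y v lam hlam.
have [->|vn0] := eqVneq v 0.
  by rewrite scaler0 !addr0 !breg0 mulr0.
have vv0 : 0 < dotp v v.
  rewrite lt_def dotpp_ge0 andbT; apply/eqP => H0.
  by move: vn0; rewrite (dotpp_eq0 v H0) eqxx.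
case: (ltrP 0 Lh) => [Lh0|Lhle]; last first.
  exfalso.
  set D2 := hs (x + v) + hs (x - v) - 2 * hs x.
  set t := (`|D2| + 2) / dotp v v.
  have t0 : 0 <= t by rewrite divr_ge0 // ?ltW // addr_ge0 // normr_ge0.
  have hq : Lh / 2 * t ^+ 2 <= 0.
    by apply: mulr_le0_ge0; [lra | exact: sqr_ge0].
  have hc : t <= t - Lh / 2 * t ^+ 2 by move: (Lh / 2 * t ^+ 2) hq => q; lra.
  have c0 : 0 <= t - Lh / 2 * t ^+ 2 by apply: le_trans hc.
  have sd := sd_bound h hs Lh dh Lip Hc x v t 1 ltr01 c0.
  have tv : t * dotp v v = `|D2| + 2 by rewrite /t divfK // gt_eqF.
  have cv : t * dotp v v <= (t - Lh / 2 * t ^+ 2) * dotp v v.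
    by rewrite ler_wpM2r // dotpp_ge0.
  have e2 : 2 * (t - Lh / 2 * t ^+ 2) * dotp v v = 2 * ((t - Lh / 2 * t ^+ 2) * dotp v v).
    by rewrite mulrA.
  rewrite e2 -/D2 in sd; rewrite tv in cv.
  exact: (arith4 _ _ _ sd cv (normr_ge0 D2) (ler_norm D2)).
have nv0 : 0 < enorm v.
  by rewrite /enorm sqrtr_gt0.
have M0 : 0 <= M.
  have := HL v 0 v; rewrite subr0 => H1.
  have := le_trans (enorm_ge0 _) H1 => H2.
  by move: H2; rewrite -mulrA pmulr_lge0 // mulr_gt0.
pose Kl := (1 + 2 * M * Lh * (enorm (y - x) + enorm v)) * lam ^+ 2.
have D1 : forall s : R, is_derive s 1
    (fun t => hs (x + t *: (lam *: v)) - Kl * hs (y + t *: v))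
    (dotp (grad hs (x + s *: (lam *: v))) (lam *: v) - Kl * dotp (grad hs (y + s *: v)) v).
  move=> s; exact: (isd_B (isd_f hs x (lam *: v) s (dhs _)) (isd_Z Kl (isd_f hs y v s (dhs _)))).
have Dd2 : forall s : R, is_derive s 1
    (fun t => dotp (grad hs (x + t *: (lam *: v))) (lam *: v) - Kl * dotp (grad hs (y + t *: v)) v)
    (dotp ('d (grad hs) (x + s *: (lam *: v)) (lam *: v)) (lam *: v) -
       Kl * dotp ('d (grad hs) (y + s *: v) v) v).
  move=> s; exact: (isd_B (isd_grad (grad hs) x (lam *: v) s (dG _))
                          (isd_Z Kl (isd_grad (grad hs) y v s (dG _)))).
have Hb : forall s : R, 0 <= s <= 1 ->
    dotp ('d (grad hs) (x + s *: (lam *: v)) (lam *: v)) (lam *: v) -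
       Kl * dotp ('d (grad hs) (y + s *: v) v) v <= 0.
  move=> s hs01.
  have Ez : dotp ('d (grad hs) (x + s *: (lam *: v)) (lam *: v)) (lam *: v) =
            lam * (lam * dotp ('d (grad hs) (x + s *: (lam *: v)) v) v).
    by rewrite linearZ dotpZl dotpZr.
  have e1 := CSn ('d (grad hs) (x + s *: (lam *: v)) v - 'd (grad hs) (y + s *: v) v) v.
  rewrite dotpBl in e1.
  have e2 := HL (x + s *: (lam *: v)) (y + s *: v) v.
  have HB := le_trans e1 (ler_wpM2r (enorm_ge0 v) e2).
  have HLB := hess_lb h hs Lh M dh Lip Hc dhs dG HL Lh0 (y + s *: v) v.
  rewrite -enorm_sq in HLB.
  exact: (arith3' Ez M0 Lh0 (enorm_ge0 _) (dist_bound x y v s lam hs01 hlam) HB HLB).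
have key := taylor_ub ler01 D1 Dd2 Hb.
rewrite /= !scale1r !scale0r !addr0 in key.
rewrite /bregman [x + _ - x]addrC addKr [y + v - y]addrC addKr.
exact: (arith2 key).
Qed.
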